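(* Let $n\ge 1$. For every $\phi\in\mathcal{B}_n$ with $\phi\neq 1$ there exist $i\in\{1,\dots,n-1\}$ and $\epsilon\in\{1,-1\}$ such that $\|\sigma_i^{\epsilon}\phi\|\le\|\phi\|-2$. Consequently $\mathcal{B}_n$ is generated by $\sigma_1,\dots,\sigma_{n-1}$.
   Context: $\Sigma_{0,1,n}$ is the free group with free basis $t_1,\dots,t_n$, and $z_1:=(t_1t_2\cdots t_n)^{-1}$. Notation: $\overline a:=a^{-1}$, $a^b:=b^{-1}ab$, and $[a]$ denotes the conjugacy class of $a$. Automorphisms act on the right and are written as exponents; they compose left to right, i.e. $w^{\phi\psi}=(w^\phi)^\psi$. $\mathcal{B}_n$ is the group of all automorphisms $\phi$ of $\Sigma_{0,1,n}$ such that $z_1^\phi=z_1$ and $\phi$ permutes the set of conjugacy classes $\{[t_1],\dots,[t_n]\}$. For $i\in\{1,\dots,n-1\}$, $\sigma_i\in\mathcal{B}_n$ is the automorphism given by $t_k^{\sigma_i}=t_k$ for $k\notin\{i,i+1\}$, $t_i^{\sigma_i}=t_{i+1}$, and $t_{i+1}^{\sigma_i}=\overline t_{i+1}t_it_{i+1}$. For $w\in\Sigma_{0,1,n}$, $|w|$ is the length of the reduced word in $t_1^{\pm1},\dots,t_n^{\pm1}$ representing $w$. For $\phi\in\mathcal{B}_n$, $\|\phi\|:=\sum_{i=1}^n|t_i^\phi|$. *)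

(* Defs.v *)
(* The free group Sigma_{0,1,n} on t_1..t_n is modelled by
   freely reduced words over the letters ('I_n * bool), where (k,false) is
   t_{k+1} and (k,true) is its inverse (indices are 0-based). *)
From mathcomp Require Import all_boot all_order all_fingroup.
Set Implicit Arguments. Unset Strict Implicit. Unset Printing Implicit Defensive.

Section FreeGroup.
Variable n : nat.

Definition letter := ('I_n * bool)%type.
Definition word := seq letter.

Definition linv (x : letter) : letter := (x.1, ~~ x.2).
Definition winv (u : word) : word := rev (map linv u).

Definition reduce (w : word) : word :=
  foldr (fun x acc => match acc with
                      | y :: r => if y == linv x then r else x :: acc
                      | [::] => [:: x]
                      end) [::] w.

Definition reduced (w : word) : bool := reduce w == w.

Definition tgen (k : 'I_n) : word := [:: (k, false)].

(* An endomorphism is given by the images of the generators;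
   ext f w = w^f (reduced). *)
Definition ext (f : 'I_n -> word) (w : word) : word :=
  reduce (flatten (map (fun x : letter => if x.2 then winv (f x.1) else f x.1) w)).

(* composition, acting on the right: t_k^(f g) = (t_k^f)^g *)
Definition acomp (f g : 'I_n -> word) : 'I_n -> word := fun k => ext g (f k).

Definition is_aut (f : 'I_n -> word) : Prop :=
  exists g : 'I_n -> word,
    forall w : word, ext g (ext f w) = reduce w /\ ext f (ext g w) = reduce w.

(* z_1 = (t_1 ... t_n)^{-1} = t_n^{-1} ... t_1^{-1} *)
Definition z1 : word := rev (map (fun k : 'I_n => (k, true)) (enum 'I_n)).

Definition conjugate (a b : word) : Prop :=
  exists u : word, reduce a = reduce (winv u ++ b ++ u).

Definition inB (f : 'I_n -> word) : Prop :=
  [/\ is_aut f, ext f z1 = z1 &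
      exists p : {perm 'I_n}, forall k : 'I_n, conjugate (f k) (tgen (p k))].

Definition is_identity (f : 'I_n -> word) : Prop :=
  forall k : 'I_n, reduce (f k) = tgen k.

Definition norm (f : 'I_n -> word) : nat := \sum_(k < n) size (reduce (f k)).

(* sigma_i^eps for the 0-based index i (i.e. sigma_{i+1} in the paper), with
   j = i+1 (meaningful when i.+1 < n).  eps = false : sigma_i, eps = true :
   sigma_i^{-1}, given explicitly by t_i -> t_i t_{i+1} t_i^{-1},
   t_{i+1} -> t_i. *)
Definition sigma (i : 'I_n) (eps : bool) : 'I_n -> word :=
  let j : 'I_n := insubd i i.+1 in
  fun k =>
    if ~~ eps then
      (if k == i then [:: (j, false)]
       else if k == j then [:: (j, true); (i, false); (j, false)]
       else tgen k)
    else
      (if k == i then [:: (i, false); (j, false); (i, true)]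
       else if k == j then [:: (i, false)]
       else tgen k).

(* product sigma_{s_1}^{e_1} ... sigma_{s_m}^{e_m} (left to right) *)
Definition sigma_prod (s : seq ('I_n * bool)) : 'I_n -> word :=
  foldr (fun p acc => acomp (sigma p.1 p.2) acc) tgen s.

End FreeGroup.

(* Main.v *)
Require Import Defs.
From mathcomp Require Import all_boot all_order all_fingroup.
From Stdlib Require Import Lia.
Set Implicit Arguments. Unset Strict Implicit. Unset Printing Implicit Defensive.

Section Red.
Variable n : nat.
Local Notation letter := (letter n).
Local Notation word := (word n).
Local Notation reduce := (@reduce n).
Local Notation winv := (@winv n).
Local Notation linv := (@linv n).

Definition st (x : letter) (acc : word) : word :=
  match acc with y :: r => if y == linv x then r else x :: acc | [::] => [:: x] end.

Lemma reduce_cons x w : reduce (x :: w) = st x (reduce w).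
Proof. by []. Qed.

Lemma linvK (x : letter) : linv (linv x) = x.
Proof. by case: x => a b; rewrite /linv /= negbK. Qed.

Lemma linv_inj : injective linv.
Proof. exact: (can_inj linvK). Qed.

Lemma linv_neq (x : letter) : (linv x == x) = false.
Proof. by case: x => a b; rewrite /linv /= xpair_eqE eqxx /=; case: b. Qed.

Definition redR : rel letter := fun a b => b != linv a.
Definition red (w : word) := sorted redR w.

Lemma red_cons x w : red (x :: w) = red w && (if w is y :: _ then y != linv x else true).
Proof. by case: w => [|y w] //=; rewrite andbC. Qed.

Lemma st_red x w : red w -> red (st x w).
Proof.
case: w => [|y w] // Hw; rewrite /st.
case: ifP => [_|Hy]; first by move: Hw; rewrite red_cons => /andP[].
by rewrite red_cons Hw Hy.
Qed.

Lemma reduce_red w : red (reduce w).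
Proof. by elim: w => [|x w IH] //=; apply: st_red. Qed.

Lemma red_reduce w : red w -> reduce w = w.
Proof.
elim: w => [|x w IH] //; rewrite red_cons => /andP[Hw Hh].
rewrite reduce_cons IH //; case: w Hw Hh {IH} => [|y w] //= _ Hy.
by rewrite (negbTE Hy).
Qed.

Lemma reduceK w : reduce (reduce w) = reduce w.
Proof. exact/red_reduce/reduce_red. Qed.

Lemma st_cancel x w : red w -> st x (st (linv x) w) = w.
Proof.
case: w => [|y w] Hw; first by rewrite /= eqxx.
rewrite /st; case: ifP => [/eqP Ey|Hy]; last by rewrite eqxx.
move: Hw; rewrite Ey linvK red_cons => /andP[_].
by case: w => [|z w] // /negbTE ->.
Qed.

Lemma foldr_st_red u acc : red acc -> red (foldr st acc u).
Proof. by elim: u => [|x u IH] //= H; apply: st_red; apply: IH. Qed.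

Lemma foldr_reduce u acc : red acc -> foldr st acc u = foldr st acc (reduce u).
Proof.
move=> Hacc; elim: u => [|x u IH] //.
rewrite reduce_cons [LHS]/= IH.
have : red (reduce u) by apply: reduce_red.
case: (reduce u) => [|y r] // Hr.
rewrite /(st x (y :: r)).
case: ifP => [/eqP Hy|] //.
rewrite /= Hy st_cancel //.
by apply: foldr_st_red => //; move: Hr; rewrite red_cons => /andP[].
Qed.

Lemma reduce_catE u v : reduce (u ++ v) = foldr st (reduce v) u.
Proof. by rewrite /reduce foldr_cat. Qed.

Lemma rCr u v : reduce (u ++ reduce v) = reduce (u ++ v).
Proof. by rewrite !reduce_catE reduceK. Qed.

Lemma rCl u v : reduce (reduce u ++ v) = reduce (u ++ v).
Proof. by rewrite !reduce_catE -foldr_reduce //; apply: reduce_red. Qed.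


Lemma winv_cat u v : winv (u ++ v) = winv v ++ winv u.
Proof. by rewrite /winv map_cat rev_cat. Qed.

Lemma winv_cons x u : winv (x :: u) = winv u ++ [:: linv x].
Proof. by rewrite /winv /= rev_cons cats1. Qed.

Lemma winv_rcons x u : winv (rcons u x) = linv x :: winv u.
Proof. by rewrite /winv map_rcons rev_rcons. Qed.

Lemma winvK u : winv (winv u) = u.
Proof. by rewrite /winv map_rev revK (mapK linvK). Qed.

Lemma size_winv u : size (winv u) = size u.
Proof. by rewrite /winv size_rev size_map. Qed.

Lemma winv1 x : winv [:: x] = [:: linv x].
Proof. by []. Qed.

Lemma rK u v : reduce (u ++ winv u ++ v) = reduce v.
Proof.
elim: u v => [|x u IH] v //.
rewrite winv_cons -catA cat_cons reduce_cons IH cat1s reduce_cons st_cancel //.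
exact: reduce_red.
Qed.

Lemma rK' u v : reduce (winv u ++ u ++ v) = reduce v.
Proof. by rewrite -{2}(winvK u) rK. Qed.

Lemma rKm w u v : reduce (w ++ u ++ winv u ++ v) = reduce (w ++ v).
Proof. by rewrite -rCr rK rCr. Qed.

Lemma rKm' w u v : reduce (w ++ winv u ++ u ++ v) = reduce (w ++ v).
Proof. by rewrite -rCr rK' rCr. Qed.

Lemma rK0 u : reduce (u ++ winv u) = [::].
Proof. by rewrite -[_ ++ _]cats0 -catA rK. Qed.

Lemma rK0' u : reduce (winv u ++ u) = [::].
Proof. by rewrite -[_ ++ _]cats0 -catA rK'. Qed.

Lemma rW u : reduce (winv (reduce u)) = reduce (winv u).
Proof.
have E1 : reduce (winv (reduce u)) = reduce (winv (reduce u) ++ reduce u ++ winv u).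
  by rewrite -rCr rCl rK0 cats0.
rewrite E1 catA -rCl rK0' //.
Qed.

Lemma rRm u v w : reduce (u ++ reduce v ++ w) = reduce (u ++ v ++ w).
Proof. by rewrite -rCr rCl rCr. Qed.

Lemma rWm u v w : reduce (u ++ winv (reduce v) ++ w) = reduce (u ++ winv v ++ w).
Proof. by rewrite -rCr -(rCl (winv (reduce v))) rW rCl rCr. Qed.

Lemma size_reduce w : size (reduce w) <= size w.
Proof.
elim: w => [|x w IH] //; rewrite reduce_cons.
case: (reduce w) IH => [|y r] //= IH; case: ifP => //= _.
  by apply: leq_trans (ltnW IH) _.
Qed.

Lemma canc u v : red u -> red v -> exists u1 c v2,
  [/\ u = u1 ++ c, v = winv c ++ v2 & reduce (u ++ v) = u1 ++ v2].
Proof.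
move=> + Hv; elim: u => [|x u IH] Hu.
  by exists [::], [::], v; rewrite red_reduce.
have Hu' : red u by move: Hu; rewrite red_cons => /andP[].
have [u1 [c [v2 [E1 E2 E3]]]] := IH Hu'.
rewrite cat_cons reduce_cons E3.
case: u1 E1 E3 => [|y u1] E1 E3.
  case: v2 E2 E3 => [|z v2] E2 E3.
    by exists [:: x], c, [::]; rewrite E1.
  rewrite /st; case: ifP => [/eqP Hz|Hz].
    exists [::], (x :: c), v2; split => //; first by rewrite E1.
    by rewrite E2 winv_cons -catA Hz.
  by exists [:: x], c, (z :: v2); rewrite E1.
exists (x :: y :: u1), c, v2; split => //; first by rewrite E1.
rewrite /st /=; move: Hu; rewrite E1 red_cons => /andP[_] /=.
by move/negbTE => ->.
Qed.

Lemma canc_size u v u1 c v2 : u = u1 ++ c -> v = winv c ++ v2 ->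
  reduce (u ++ v) = u1 ++ v2 ->
  size (reduce (u ++ v)) + 2 * size c = size u + size v.
Proof.
move=> -> -> ->; rewrite !size_cat size_winv.
rewrite -!plusE -!multE; lia.
Qed.

End Red.

Lemma cat_prefix (T : Type) (s1 s2 s3 s4 : seq T) :
  s1 ++ s2 = s3 ++ s4 -> size s3 <= size s1 ->
  exists d, s1 = s3 ++ d /\ s4 = d ++ s2.
Proof.
elim: s3 s1 => [|x s3 IH] s1 /=; first by move=> <- _; exists s1.
case: s1 => [|y s1] //= [-> E] H.
by have [d [-> ->]] := IH _ E H; exists d.
Qed.

Section Red2.
Variable n : nat.
Local Notation letter := (letter n).
Local Notation word := (word n).
Local Notation reduce := (@reduce n).
Local Notation winv := (@winv n).
Local Notation linv := (@linv n).
Local Notation red := (@red n).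

Lemma red_cat (u v : word) : red (u ++ v) = [&& red u, red v &
  (if u is x :: u' then (if v is y :: _ then y != linv (last x u') else true) else true)].
Proof.
case: u => [|x u]; first by rewrite /= andbT.
case: v => [|y v]; first by rewrite cats0 /= andbT.
rewrite /red /= cat_path /= /redR.
by case: (path _ x u); case: (y != _); case: (path _ y v).
Qed.

Lemma red_catl (u v : word) : red (u ++ v) -> red u.
Proof. by rewrite red_cat => /andP[]. Qed.

Lemma red_catr (u v : word) : red (u ++ v) -> red v.
Proof. by rewrite red_cat => /and3P[]. Qed.

Lemma red_glue (X Y Z : word) : red (X ++ Y) -> red (Y ++ Z) -> Y != [::] ->
  red (X ++ Y ++ Z).
Proof.
case: Y => [|y Y] // H1 H2 _.
rewrite red_cat H2 (red_catl H1) /=.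
move: H1; rewrite red_cat => /and3P[_ _].
by case: X => [|x X] //; rewrite last_cat.
Qed.

Lemma winv_conj (A : word) x : winv (winv A ++ x :: A) = winv A ++ linv x :: A.
Proof. by rewrite winv_cat winv_cons winvK -catA. Qed.

Lemma cnf_step (A : word) x y : red (winv A ++ x :: A) ->
  exists A', reduce (linv y :: (winv A ++ x :: A) ++ [:: y]) = winv A' ++ x :: A'.
Proof.
case/lastP: A => [|A' z] HM.
  exists (if (x == y) || (y == linv x) then [::] else [:: y]).
  rewrite /= /reduce /=.
  case: (eqVneq y (linv x)) => [->|Hy]; first by rewrite orbT /= linvK.
  rewrite orbF /= linvK.
  by case: eqP => [->|].

case: (eqVneq z (linv y)) => [Ez|Hz].
  exists A'.
  move: HM; rewrite winv_rcons Ez linvK => HM.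
  have -> : linv y :: ((y :: winv A') ++ x :: rcons A' (linv y)) ++ [:: y] =
     winv [:: y] ++ [:: y] ++ ((winv A' ++ x :: A') ++ [:: linv y] ++ winv [:: linv y] ++ [::]).
    by rewrite -!catA /= linvK -cats1 -catA.
  etransitivity; first exact: rK'.
  rewrite rKm cats0 red_reduce //.
  move: HM; rewrite -cats1.
  have -> : (y :: winv A') ++ x :: (A' ++ [:: linv y]) =
     [:: y] ++ ((winv A' ++ x :: A') ++ [:: linv y]) by rewrite /= -!catA.
  by move=> /red_catr /red_catl.
exists (rcons (rcons A' z) y).
rewrite red_reduce; last first.
  move: HM; rewrite winv_rcons => HM.
  rewrite red_cons red_cat HM /= last_cat /= last_rcons.
  have Hz' : y != linv z by apply: contra Hz => /eqP ->; rewrite linvK.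
  by rewrite Hz' (inj_eq (@linv_inj n)) Hz.
by rewrite !winv_rcons -!cats1 -!catA /= -!catA.
Qed.

Lemma cnf (u : word) x : exists A, reduce (winv u ++ x :: u) = winv A ++ x :: A.
Proof.
elim/last_ind: u => [|u y [A IH]]; first by exists [::].
have HM : red (winv A ++ x :: A) by rewrite -IH; apply: reduce_red.
have [A' E] := cnf_step y HM.
exists A'; rewrite -E winv_rcons cat_cons reduce_cons.
by rewrite [RHS]reduce_cons -IH rCl -cats1 -catA.
Qed.

End Red2.

Section Dec.
Variable n : nat.
Local Notation letter := (letter n).
Local Notation word := (word n).
Local Notation reduce := (@reduce n).
Local Notation winv := (@winv n).
Local Notation linv := (@linv n).
Local Notation red := (@red n).

Lemma rC3 (X Y Z : word) : reduce (X ++ Y ++ Z) = reduce (reduce X ++ Y ++ reduce Z).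
Proof. by rewrite rCl !catA rCr. Qed.

Lemma dec (A B : word) u v U1 C V2 :
  winv A ++ u :: A = U1 ++ C -> winv B ++ v :: B = winv C ++ V2 ->
  size A < size C -> size A <= size B -> v != linv u ->
  exists E, size E + 1 = size B /\
   reduce ((winv A ++ u :: A) ++ (winv B ++ v :: B) ++ winv (winv A ++ u :: A))
   = reduce (winv E ++ v :: E).
Proof.
move=> HU HV HC HAB Hv.
have HsU : size U1 + size C = (size A).*2.+1.
  by rewrite -size_cat -HU size_cat /= size_winv addnS -addnn.
have Hs1 : size U1 <= size (winv A).
  by rewrite size_winv; move: HsU HC; rewrite -addnn -!plusE => E /ltP HC; apply/leP; lia.
have [d [Ed EC]] := cat_prefix HU Hs1.
move: HV; rewrite EC winv_cat winv_cons -!catA => HV.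
have Hs : size (winv A ++ [:: linv u]) <= size (winv B).
  rewrite size_cat !size_winv /= addn1 ltn_neqAle HAB andbT.
  apply/negP => /eqP Eab.
  have Hs2 : size (winv A) <= size (winv B) by rewrite !size_winv Eab.
  have [D' [E1 E2]] := cat_prefix HV Hs2.
  have HD' : size D' = 0.
    by move/(congr1 size): E1; rewrite size_cat !size_winv Eab -plusE; lia.
  case: D' E1 E2 HD' => // _ [E2 _] _.
  by move: Hv; rewrite -E2 eqxx.
have [D [ED _]] := cat_prefix (etrans HV (catA _ _ _)) Hs.
have EB : B = winv D ++ u :: A by rewrite -(winvK B) ED !winv_cat winvK /= linvK.
exists (winv D ++ A); split.
  move/(congr1 size): ED; rewrite !size_cat !size_winv /=.
  by rewrite -!plusE; lia.
have E1 : reduce ((winv A ++ u :: A) ++ winv B) = reduce (winv A ++ D).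
  rewrite ED.
  have -> : (winv A ++ u :: A) ++ (winv A ++ [:: linv u]) ++ D =
    (winv A ++ [:: u]) ++ A ++ winv A ++ (winv [:: u] ++ D) by rewrite -!catA.
  by rewrite rKm -catA rKm.
have E2 : reduce (B ++ winv (winv A ++ u :: A)) = reduce (winv D ++ A).
  rewrite EB winv_conj.
  have -> : (winv D ++ u :: A) ++ winv A ++ linv u :: A =
    (winv D ++ [:: u]) ++ A ++ winv A ++ (winv [:: u] ++ A) by rewrite -!catA.
  by rewrite rKm -catA rKm.
transitivity (reduce (((winv A ++ u :: A) ++ winv B) ++ [:: v] ++ (B ++ winv (winv A ++ u :: A)))).
  by rewrite -!catA.
rewrite rC3 E1 E2 -rC3 winv_cat winvK.
by rewrite -!catA.
Qed.

End Dec.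

Lemma arith K P P' a a' c M : c <= a -> c <= a' -> K + 1 + 2 * maxn a M <= P ->
  P' + 2 * c = P + 2 * a' + 1 -> K.+2 + 2 * maxn a' (maxn a M) <= P'.
Proof.
move=> H1 H2 H3 H4.
have Ha : a <= maxn a M := leq_maxl _ _.
case: (leqP a' (maxn a M)) => Hm.
  move: (maxn a M) Ha Hm H3 => m Ha Hm H3.
  move/leP: H1; move/leP: H2; move/leP: H3; move/leP: Ha; move/leP: Hm.
  move: H4; rewrite -!plusE -!multE => *; apply/leP; lia.
move: (maxn a M) Ha Hm H3 => m Ha Hm H3.
move/leP: H1; move/leP: H2; move/leP: H3; move/leP: Ha; move/ltP: Hm.
move: H4; rewrite -!plusE -!multE => *; apply/leP; lia.
Qed.

Section Chain.
Variable n : nat.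
Local Notation letter := (letter n).
Local Notation word := (word n).
Local Notation reduce := (@reduce n).
Local Notation winv := (@winv n).
Local Notation linv := (@linv n).
Local Notation red := (@red n).

Definition Wp (p : word * letter) : word := winv p.1 ++ p.2 :: p.1.
Definition nodec (p q : word * letter) : bool :=
  size (Wp p) + size (Wp q) <= size (reduce (Wp p ++ Wp q)) + 2 * minn (size p.1) (size q.1).
Definition mx (L : seq (word * letter)) := foldr (fun p m => maxn (size p.1) m) 0 L.

Lemma chain (L : seq (word * letter)) : forall (X : word) (p : word * letter) (K M : nat),
  red (X ++ p.2 :: p.1) -> red (Wp p) -> all (fun q => red (Wp q)) L -> path nodec p L ->
  K + 1 + 2 * maxn (size p.1) M <= size (X ++ p.2 :: p.1) ->
  K + 1 + size L + 2 * maxn (maxn (size p.1) M) (mx L)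
    <= size (reduce ((X ++ p.2 :: p.1) ++ flatten (map Wp L))).
Proof.
elim: L => [|q L IH] X [A x] K M /= HP Hp.
  by move=> _ _ H; rewrite cats0 red_reduce // maxn0 addn0.
case/andP=> Hq HL /andP[Hnd Hpath] Hsz.
have [U1 [C [V2 [EU EV ER]]]] := canc Hp Hq.
have Hs := canc_size EU EV ER.
move: Hnd; rewrite /nodec -Hs /= => Hnd.
have HcA : size C <= size A.
  move: Hnd; rewrite leq_add2l leq_mul2l /= => /leq_trans; apply; exact: geq_minl.
have HcA' : size C <= size q.1.
  move: Hnd; rewrite leq_add2l leq_mul2l /= => /leq_trans; apply; exact: geq_minr.
have HU : U1 ++ C = (winv A ++ [:: x]) ++ A by rewrite -EU /Wp /= -catA.
have HsU1 : size (winv A ++ [:: x]) <= size U1.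
  move/(congr1 size): HU; rewrite !size_cat size_winv /= => E.
  move/leP: HcA; move: E; rewrite -!plusE => *; apply/leP; lia.
have [A0 [EU1 EA]] := cat_prefix HU HsU1.
case: q Hq Hpath EV ER Hs HcA' {Hnd} => A' x' Hq Hpath EV ER Hs HcA' /=.
have HV : winv A' ++ x' :: A' = winv C ++ V2 by rewrite -EV.
have HsC : size (winv C) <= size (winv A') by rewrite !size_winv.
have [D [ED EV2]] := cat_prefix HV HsC.
have HR1 : red (X ++ x :: A0) by move: HP; rewrite EA -cat_cons catA => /red_catl.
have HR2 : red ((x :: A0) ++ V2).
  have := reduce_red (Wp (A, x) ++ Wp (A', x')).
  by rewrite ER EU1 -!catA /= => /red_catr.
have HP' : red ((X ++ x :: A0 ++ D) ++ x' :: A').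
  have HR3 : red ((x :: A0) ++ D ++ x' :: A') by rewrite -EV2.
  have := red_glue HR1 HR3 (isT : x :: A0 != [::]).
  have -> : (X ++ x :: A0 ++ D) ++ x' :: A' = X ++ (x :: A0) ++ D ++ x' :: A' by rewrite -!catA /= -!catA.
  by [].

have Hsz' : K.+2 + 2 * maxn (size A') (maxn (size A) M) <= size ((X ++ x :: A0 ++ D) ++ x' :: A').
  apply: (@arith K (size (X ++ x :: A)) _ (size A) (size A') (size C) M HcA HcA' Hsz).
  move/(congr1 size): ED; rewrite EA !size_cat !size_winv /= => E.
  by rewrite !size_cat E; move: E; rewrite -!plusE -!multE => E; lia.
have := IH (X ++ x :: A0 ++ D) (A', x') K.+1 (maxn (size A) M) HP' Hq HL Hpath.
rewrite /= addn1 => /(_ Hsz').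
have -> : maxn (maxn (size A) M) (maxn (size A') (mx L)) =
   maxn (maxn (size A') (maxn (size A) M)) (mx L) by rewrite maxnCA maxnA.
have -> : reduce ((X ++ x :: A) ++ Wp (A', x') ++ flatten [seq Wp i | i <- L]) =
   reduce (((X ++ x :: A0 ++ D) ++ x' :: A') ++ flatten [seq Wp i | i <- L]).
  rewrite /Wp /= ED EA.
  have -> : (X ++ x :: A0 ++ C) ++ ((winv C ++ D) ++ x' :: A') ++ flatten [seq Wp i | i <- L]
    = (X ++ x :: A0) ++ C ++ winv C ++ (D ++ x' :: A' ++ flatten [seq Wp i | i <- L])
    by rewrite -!catA /= -!catA.
  by rewrite rKm -!catA /= -!catA.
by rewrite addnS -addn1.
Qed.

End Chain.

Section Ext.
Variable n : nat.
Local Notation letter := (letter n).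
Local Notation word := (word n).
Local Notation reduce := (@reduce n).
Local Notation winv := (@winv n).
Local Notation linv := (@linv n).
Local Notation red := (@red n).

Lemma rW_end u v : reduce (u ++ winv (reduce v)) = reduce (u ++ winv v).
Proof. by rewrite -rCr rW rCr. Qed.

Lemma rKe u v : reduce (u ++ v ++ winv v) = reduce u.
Proof. by rewrite -[v ++ winv v]cats0 -catA rKm cats0. Qed.

Lemma rKe' u v : reduce (u ++ winv v ++ v) = reduce u.
Proof. by rewrite -[winv v ++ v]cats0 -catA rKm' cats0. Qed.

Lemma r3 (a b c : word) : reduce (a ++ b ++ c) = reduce (reduce a ++ reduce b ++ reduce c).
Proof. by rewrite rC3 rRm. Qed.

Lemma reduce_flat (T : Type) (F G : T -> word) (s : seq T) :
  (forall x, reduce (F x) = reduce (G x)) ->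
  reduce (flatten (map F s)) = reduce (flatten (map G s)).
Proof.
move=> H; elim: s => [|x s IH] //=.
by rewrite -rCl H rCl -rCr IH rCr.
Qed.

Lemma ext_congr (g h : 'I_n -> word) w :
  (forall k, reduce (g k) = reduce (h k)) -> ext g w = ext h w.
Proof.
move=> H; apply: reduce_flat => x; case: x.2 => //.
by rewrite -rW H rW.
Qed.

Lemma ext1 (f : 'I_n -> word) a : ext f [:: (a, false)] = reduce (f a).
Proof. by rewrite /ext /= cats0. Qed.

Lemma ext_t (f : 'I_n -> word) k : ext f (tgen k) = reduce (f k).
Proof. exact: ext1. Qed.

Lemma ext3 (f : 'I_n -> word) a b :
  ext f [:: (a, false); (b, false); (a, true)] =
  reduce (reduce (f a) ++ reduce (f b) ++ winv (reduce (f a))).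
Proof.
rewrite /ext /= cats0 rCl rRm [in RHS]catA rW_end; by rewrite catA.
Qed.

Lemma ext3' (f : 'I_n -> word) a b :
  ext f [:: (b, true); (a, false); (b, false)] =
  reduce (winv (reduce (f b)) ++ reduce (f a) ++ reduce (f b)).
Proof.
by rewrite /ext /= cats0 r3 [in RHS]r3 rW !reduceK.
Qed.

Lemma sum_swap (F G : 'I_n -> nat) i j : i != j ->
  (forall k, k != i -> k != j -> F k = G k) ->
  F i + F j + 2 <= G i + G j -> \sum_(k < n) F k + 2 <= \sum_(k < n) G k.
Proof.
move=> Hij HFG H.
rewrite (bigD1 (F:=F) i) // (bigD1 (F:=G) i) //.
rewrite (bigD1 (F:=F) j) /=; last by rewrite eq_sym.
rewrite (bigD1 (F:=G) j) /=; last by rewrite eq_sym.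
rewrite (eq_bigr G); last by move=> k /andP[Hi Hj]; apply: HFG.
move: H; rewrite -!plusE => H; apply/leP; move/leP: H; lia.
Qed.

Variable f : 'I_n -> word.

Lemma sig_i (i : 'I_n) eps : sigma i eps i =
  if ~~ eps then ([:: (insubd i i.+1, false)] : word)
  else [:: (i, false); (insubd i i.+1, false); (i, true)].
Proof. by rewrite /sigma eqxx; case: eps. Qed.

Lemma sig_j (i : 'I_n) eps : insubd i i.+1 != i -> sigma i eps (insubd i i.+1) =
  if ~~ eps then ([:: (insubd i i.+1, true); (i, false); (insubd i i.+1, false)] : word)
  else [:: (i, false)].
Proof. by move=> H; rewrite /sigma (negbTE H) eqxx; case: eps. Qed.

Lemma sig_o (i : 'I_n) eps (k : 'I_n) : k != i -> k != insubd i i.+1 -> sigma i eps k = tgen k.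
Proof. by move=> H1 H2; rewrite /sigma (negbTE H1) (negbTE H2); case: eps. Qed.

Lemma insubd_neq (i : 'I_n) : i.+1 < n -> insubd i i.+1 != i.
Proof.
move=> H; apply/eqP => /(congr1 val); rewrite val_insubd H => /eqP.
by rewrite eqn_leq ltnn.
Qed.

End Ext.

Section Q.
Variable n : nat.
Local Notation letter := (letter n).
Local Notation word := (word n).
Local Notation reduce := (@reduce n).
Local Notation winv := (@winv n).
Local Notation linv := (@linv n).
Local Notation red := (@red n).

Definition prodw (f : 'I_n -> word) : word := flatten (map f (enum 'I_n)).
Definition Tw : word := map (fun k => (k, false)) (enum 'I_n).
Definition Qf (f : 'I_n -> word) :=
  reduce (prodw f) = Tw /\ exists q : 'I_n -> 'I_n, forall k, Defs.conjugate (f k) (tgen (q k)).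

Lemma red_pos (w : word) : all (fun x : letter => ~~ x.2) w -> red w.
Proof.
elim: w => [|x w IH] // /andP[Hx Hw].
rewrite red_cons IH //; case: w Hw {IH} => [|y w] //= /andP[Hy _].
apply/eqP => Ey; move: Hy; rewrite Ey /linv /=; case: x Hx {Ey} => a [] //.
Qed.

Lemma Tw_red : reduce Tw = Tw.
Proof. by apply/red_reduce/red_pos; rewrite /Tw all_map; apply/allP. Qed.

Lemma flat_rev (f : 'I_n -> word) (s : seq 'I_n) :
  flatten (rev (map (fun k => winv (f k)) s)) = winv (flatten (map f s)).
Proof.
elim: s => [|x s IH] //=.
by rewrite rev_cons flatten_rcons IH winv_cat.
Qed.

Lemma inB_Q f : inB f -> Qf f.
Proof.
case=> _ Hz [p Hp]; split; last by exists p.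
have Ez1 : z1 n = winv Tw.
  by rewrite /z1 /Tw /winv -!map_comp; congr rev; apply: eq_map.
have E1 : flatten (map (fun x : letter => if x.2 then winv (f x.1) else f x.1) (z1 n))
    = winv (prodw f).
  rewrite /z1 map_rev -map_comp.
  by rewrite (eq_map (g := fun k => winv (f k))) // flat_rev.
move: Hz; rewrite /ext E1 Ez1 => Hz.
by rewrite -(winvK (prodw f)) -rW Hz winvK Tw_red.
Qed.

Lemma flatten_single (T : Type) (g : T -> letter) (s : seq T) :
  flatten (map (fun x => [:: g x]) s) = map g s.
Proof. by elim: s => [|x s IH] //=; rewrite IH. Qed.

Lemma reduce_flat_in (T : eqType) (F G : T -> word) (s : seq T) :
  {in s, forall x, reduce (F x) = reduce (G x)} ->
  reduce (flatten (map F s)) = reduce (flatten (map G s)).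
Proof.
elim: s => [|x s IH] //= H.
rewrite -rCl H ?mem_head // rCl -rCr IH ?rCr // => y Hy.
by apply: H; rewrite in_cons Hy orbT.
Qed.

Lemma enum_split (i : 'I_n) : i.+1 < n -> exists l1 l2,
  enum 'I_n = l1 ++ i :: insubd i i.+1 :: l2.
Proof.
move=> Hi.
have Hs : i.+1 < size (enum 'I_n) by rewrite size_enum_ord.
exists (take i (enum 'I_n)), (drop i.+2 (enum 'I_n)).
rewrite -{1}(cat_take_drop i (enum 'I_n)); congr (_ ++ _).
rewrite (drop_nth i) ?(ltnW Hs) // (drop_nth i) //.
congr (_ :: _ :: _).
  by apply: val_inj; rewrite /= nth_enum_ord // (ltnW Hi).
by apply: val_inj; rewrite /= nth_enum_ord // val_insubd Hi.
Qed.

Lemma conj_red a a' b : reduce a = reduce a' -> Defs.conjugate a b -> Defs.conjugate a' b.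
Proof. by move=> E [u Hu]; exists u; rewrite -E. Qed.

Lemma conj_conj a b w : Defs.conjugate a b -> Defs.conjugate (winv w ++ a ++ w) b.
Proof.
case=> u Hu; exists (u ++ w).
rewrite -rRm Hu rRm winv_cat.
by rewrite -!catA.
Qed.


Lemma flatten_c (T : Type) (a : seq T) s : flatten (a :: s) = a ++ flatten s.
Proof. by []. Qed.

Lemma r2 (a b : word) : reduce (a ++ b) = reduce (reduce a ++ reduce b).
Proof. by rewrite rCl rCr. Qed.

Lemma r4 (X A B Y : word) : reduce (X ++ A ++ B ++ Y) = reduce (reduce X ++ reduce (A ++ B) ++ reduce Y).
Proof. by rewrite (catA A B Y) r3. Qed.

Section G.
Variables (f : 'I_n -> word) (i : 'I_n).
Hypothesis Hi : i.+1 < n.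
Local Notation j := (insubd i i.+1).

Lemma gI0 : reduce (acomp (sigma i false) f i) = reduce (f j).
Proof. by rewrite /acomp sig_i /= ext1 reduceK. Qed.

Lemma gJ0 : reduce (acomp (sigma i false) f j) = reduce (winv (f j) ++ f i ++ f j).
Proof. by rewrite /acomp sig_j ?insubd_neq //= ext3' reduceK r3 [in RHS]r3 rW !reduceK. Qed.

Lemma gI1 : reduce (acomp (sigma i true) f i) = reduce (f i ++ f j ++ winv (f i)).
Proof. by rewrite /acomp sig_i /= ext3 reduceK r3 [in RHS]r3 rW !reduceK. Qed.

Lemma gJ1 : reduce (acomp (sigma i true) f j) = reduce (f i).
Proof. by rewrite /acomp sig_j ?insubd_neq //= ext1 reduceK. Qed.

Lemma gO eps k : k != i -> k != j -> reduce (acomp (sigma i eps) f k) = reduce (f k).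
Proof. by move=> H1 H2; rewrite /acomp sig_o // ext_t reduceK. Qed.

Lemma gIJ eps : reduce (acomp (sigma i eps) f i ++ acomp (sigma i eps) f j) = reduce (f i ++ f j).
Proof.
case: eps; rewrite r2.
  by rewrite gI1 gJ1 -r2 -!catA (catA (f i) (f j)) rKe'.
by rewrite gI0 gJ0 -r2 rK.
Qed.

End G.

Lemma Qpres f (i : 'I_n) eps : Qf f -> i.+1 < n -> Qf (acomp (sigma i eps) f).
Proof.
move=> [Hp [q Hq]] Hi.
set j := insubd i i.+1.
have Hji : j != i by apply: insubd_neq.
set g := acomp (sigma i eps) f.
split.
  have [l1 [l2 El]] := enum_split Hi.
  have Hu := enum_uniq 'I_n; rewrite El cat_uniq in Hu.
  case/and3P: Hu => _ Hh Hu2.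
  have Hi1 : i \notin l1.
    by apply: contra Hh => H; apply/hasP; exists i => //; rewrite mem_head.
  have Hj1 : j \notin l1.
    by apply: contra Hh => H; apply/hasP; exists j => //; rewrite in_cons mem_head orbT.
  move: Hu2; rewrite cons_uniq in_cons negb_or cons_uniq => /andP[/andP[_ Hi2] /andP[Hj2 _]].
  rewrite -Hp /prodw El !map_cat !flatten_cat !map_cons !flatten_c.
  rewrite r4 [in RHS]r4 gIJ //.
  rewrite (reduce_flat_in (G := f)); last first.
    move=> k Hk; apply: gO => //; apply/eqP => Ek; move: Hk; rewrite Ek.
      by move/negP: Hi1.
    by move/negP: Hj1.
  rewrite (reduce_flat_in (F := g) (G := f) (s := l2)) //.
  move=> k Hk; apply: gO => //; apply/eqP => Ek; move: Hk; rewrite Ek.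
    by move/negP: Hi2.
  by move/negP: Hj2.
exists (fun k => if k == i then q j else if k == j then q i else q k) => k.
case: (eqVneq k i) => [->|Hki].
  case: eps @g => /=.
    apply: (conj_red (a := winv (winv (f i)) ++ f j ++ winv (f i))).
      by rewrite winvK gI1.
    exact: conj_conj.
  apply: (conj_red (a := f j)); first by rewrite gI0.
  exact: Hq.
case: (eqVneq k j) => [->|Hkj].
  case: eps @g => /=.
    by apply: (conj_red (a := f i)); [rewrite gJ1|apply: Hq].
  apply: (conj_red (a := winv (f j) ++ f i ++ f j)); first by rewrite gJ0.
  exact: conj_conj.
by apply: (conj_red (a := f k)); [rewrite gO|apply: Hq].
Qed.

End Q.

Section Core.
Variable n : nat.
Local Notation letter := (letter n).
Local Notation word := (word n).
Local Notation reduce := (@reduce n).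
Local Notation winv := (@winv n).
Local Notation linv := (@linv n).
Local Notation red := (@red n).

Lemma rR3 (a b c : word) : reduce (a ++ b ++ reduce c) = reduce (a ++ b ++ c).
Proof. by rewrite catA rCr -catA. Qed.

Lemma mx_ge (L : seq (word * letter)) p : p \in L -> size p.1 <= mx L.
Proof.
elim: L => [|x L IH] //=; rewrite in_cons => /orP[/eqP ->|H].
  exact: leq_maxl.
by apply: leq_trans (IH H) _; apply: leq_maxr.
Qed.

Lemma size_reduce_winv (w : word) : size (reduce (winv w)) <= size (reduce w).
Proof. by rewrite -rW; apply: leq_trans (size_reduce _) _; rewrite size_winv. Qed.

Lemma iota_succ m k : sorted (fun a b : nat => b == a.+1) (iota m k).
Proof.
elim: k m => [|k IH] m //=.
case: k IH => [|k] IH //=; rewrite eqxx /=.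
exact: (IH m.+1).
Qed.

Lemma size_Wp (p : word * letter) : size (Wp p) = (size p.1).*2.+1.
Proof. by rewrite /Wp size_cat size_winv /= addnS -addnn. Qed.

Lemma core (f : 'I_n -> word) : 0 < n -> Qf f -> ~ is_identity f ->
  exists (i : 'I_n) (eps : bool), i.+1 < n /\ norm (acomp (sigma i eps) f) + 2 <= norm f.
Proof.
move=> Hn [Hprod [q Hq]] Hid.
have : forall k, exists A, reduce (f k) = Wp (A, (q k, false)).
  move=> k; have [u Hu] := Hq k; have [A HA] := cnf u (q k, false).
  by exists A; rewrite Hu /Wp /= HA.
case/fin_all_exists => Af HAf.
pose pr k := (Af k, (q k, false)).
case: (boolP [exists i : 'I_n, exists eps : bool,
   (i.+1 < n) && (norm (acomp (sigma i eps) f) + 2 <= norm f)]).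
  by case/existsP => i /existsP [eps /andP [H1 H2]]; exists i, eps.
move=> Hno; exfalso; apply: Hid.
have Hnd : forall i : 'I_n, i.+1 < n -> nodec (pr i) (pr (insubd i i.+1)).
  move=> i Hi; set j := insubd i i.+1.
  have Hji : j != i by apply: insubd_neq.
  apply/negPn/negP => Hbad.
  have HUr : red (Wp (pr i)) by rewrite -HAf; apply: reduce_red.
  have HVr : red (Wp (pr j)) by rewrite -HAf; apply: reduce_red.
  have [U1 [C [V2 [EU EV ER]]]] := canc HUr HVr.
  have Hs := canc_size EU EV ER.
  have HC : minn (size (Af i)) (size (Af j)) < size C.
    move: Hbad; rewrite /nodec -Hs -ltnNge => H.
    by rewrite -(ltn_pmul2l (isT : 0 < 2)); move: H; rewrite ltn_add2l.
  move/existsPn: Hno => /(_ i) /existsPn Hno.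
  case: (leqP (size (Af i)) (size (Af j))) => Hab.
    move: HC; rewrite (minn_idPl Hab) => HC.
    have Hv : (q j, false) != linv (q i, false) by rewrite /linv /= xpair_eqE andbF.
    have [E [HE1 HE2]] := dec (A := Af i) (B := Af j) (u := (q i, false)) EU EV HC Hab Hv.
    move: (Hno true); rewrite Hi /= => /negP; apply.
    rewrite /norm; apply: (sum_swap (i := i) (j := j)); first by rewrite eq_sym.
      by move=> k H1 H2; rewrite gO.
    rewrite gI1 gJ1 // -/j.
    have E3 : reduce (f i ++ f j ++ winv (f i)) = reduce (winv E ++ (q j, false) :: E).
      rewrite r3 -rW !HAf rR3; exact: HE2.
    rewrite E3 !HAf !size_Wp /=.
    have := size_reduce (winv E ++ (q j, false) :: E).
    rewrite size_cat size_winv /= -HE1.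
    move: (size (reduce _)) (size E) (size (Af i)) => r e a.
    rewrite -!addnn -!plusE => H; apply/leP; move/leP: H; lia.
  move: HC; rewrite (minn_idPr (ltnW Hab)) => HC.
  have EU' : winv (Af i) ++ linv (q i, false) :: Af i = winv C ++ winv U1.
    by rewrite -winv_conj -winv_cat -EU.
  have EV' : winv (Af j) ++ linv (q j, false) :: Af j = winv V2 ++ C.
    have : winv (Wp (pr j)) = winv V2 ++ C by rewrite EV winv_cat winvK.
    by rewrite /Wp /= winv_conj.
  have Hv : linv (q i, false) != linv (linv (q j, false)).
    by rewrite linvK /linv /= xpair_eqE andbF.
  have [E [HE1 HE2]] := dec (A := Af j) (B := Af i) EV' EU' HC (ltnW Hab) Hv.
  move: (Hno false); rewrite Hi /= => /negP; apply.
  rewrite /norm; apply: (sum_swap (i := i) (j := j)); first by rewrite eq_sym.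
    by move=> k H1 H2; rewrite gO.
  rewrite gI0 gJ0 // -/j.
  have E3 : size (reduce (winv (f j) ++ f i ++ f j)) <= size (reduce (winv E ++ linv (q i, false) :: E)).
    rewrite r3 -rW !HAf rCl.
    have -> : winv (Wp (pr j)) ++ Wp (pr i) ++ Wp (pr j) =
      winv (winv (Wp (pr j)) ++ winv (Wp (pr i)) ++ winv (winv (Wp (pr j)))).
      by rewrite !winv_cat !winvK catA.
    apply: leq_trans (size_reduce_winv _) _.
    by rewrite /Wp /= (winv_conj (Af j)) (winv_conj (Af i)) HE2.
  have E4 := size_reduce (winv E ++ linv (q i, false) :: E).
  move: E3 E4; rewrite !HAf !size_Wp size_cat size_winv /= -HE1.
  move: (size (reduce (winv E ++ _))) (size (reduce (winv (f j) ++ _))) (size E) (size (Af j)) => r r' e b.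
  rewrite -!addnn -!plusE => H3 H4; apply/leP; move/leP: H3; move/leP: H4; lia.
have Hsort : sorted (@nodec n) (map pr (enum 'I_n)).
  rewrite sorted_map.
  have H0 : sorted (relpre val (fun a b : nat => b == a.+1)) (enum 'I_n).
    by rewrite -sorted_map val_enum_ord; apply: iota_succ.
  apply: sub_sorted H0 => x y /= /eqP Hy.
  have Hx : x.+1 < n by rewrite -Hy ltn_ord.
  have -> : y = insubd x x.+1 by apply: val_inj; rewrite val_insubd Hx.
  exact: Hnd.
have Hflat : reduce (prodw f) = reduce (flatten (map (fun k => Wp (pr k)) (enum 'I_n))).
  by apply: reduce_flat => x; rewrite -HAf reduceK.
case Een: (enum 'I_n) Hsort Hflat => [|k0 E'] Hsort Hflat.
  by exfalso; move: (size_enum_ord n) Hn; rewrite Een /= => <-.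
have Hch := chain (L := map pr E') (X := winv (Af k0)) (p := pr k0) (K := 0) (M := 0).
have HR0 : red (Wp (pr k0)) by rewrite -HAf; apply: reduce_red.
have HRL : all (fun q => red (Wp q)) (map pr E').
  by apply/allP => p /mapP [k _ ->]; rewrite -HAf; apply: reduce_red.
have Hsz0 : 0 + 1 + 2 * maxn (size (pr k0).1) 0 <= size (winv (Af k0) ++ (pr k0).2 :: (pr k0).1).
  by rewrite maxn0 /= size_cat size_winv /= -!plusE -!multE; apply/leP; lia.
move: (Hch HR0 HR0 HRL Hsort Hsz0).
rewrite -[winv _ ++ _]/(Wp (pr k0)) -map_comp -[_ ++ flatten _]/(flatten (map (fun k => Wp (pr k)) (k0 :: E'))).
rewrite -Hflat Hprod /Tw Een !size_map /= maxn0 => Hle.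
have Hmx : maxn (size (Af k0)) (mx (map pr E')) = 0.
  move: Hle; move: (maxn _ _) => m; rewrite -!plusE -!multE => /leP H; lia.
have Hall : forall k, Af k = [::].
  move=> k; apply/size0nil.
  have : k \in enum 'I_n by rewrite mem_enum.
  rewrite Een in_cons => /orP[/eqP ->|Hk].
    have H2 := leq_maxl (size (Af k0)) (mx (map pr E')); rewrite Hmx in H2.
    by apply/eqP; rewrite -leqn0.
  have H1 := mx_ge (map_f pr Hk).
  have H2 := leq_maxr (size (Af k0)) (mx (map pr E')); rewrite Hmx in H2.
  by apply/eqP; rewrite -leqn0 (leq_trans H1 H2).
have Hpos : map (fun k => (q k, false)) (k0 :: E') = map (fun k => (k, false)) (k0 :: E').
  rewrite -Een -[RHS]/(Tw n) -Hprod Hflat Een.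
  rewrite (eq_map (g := fun k => [:: (q k, false)])); last by move=> k; rewrite /Wp /pr Hall.
  rewrite flatten_map1 red_reduce //; apply: red_pos.
  by rewrite all_map; apply/allP.
move=> k; rewrite HAf /Wp Hall /=.
have Hk : k \in k0 :: E' by rewrite -Een mem_enum.
by have := (eq_in_map _ _ _).2 Hpos k Hk => [[->]].

Qed.

End Core.

Section P2.
Variable n : nat.
Local Notation letter := (letter n).
Local Notation word := (word n).
Local Notation reduce := (@reduce n).
Local Notation winv := (@winv n).
Local Notation linv := (@linv n).
Local Notation red := (@red n).

Lemma rW_front (v w : word) : reduce (winv (reduce v) ++ w) = reduce (winv v ++ w).
Proof. by rewrite -rCl rW rCl. Qed.

Lemma back (f : 'I_n -> word) (i : 'I_n) eps k : i.+1 < n ->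
  ext (acomp (sigma i eps) f) (sigma i (~~ eps) k) = reduce (f k).
Proof.
move=> Hi; set j := insubd i i.+1.
have Hji : j != i by apply: insubd_neq.
set g := acomp (sigma i eps) f.
case: (eqVneq k i) => [->|Hki].
  rewrite sig_i; case: eps @g => g /=.
    by rewrite ext1 gJ1.
  rewrite ext3 gI0 gJ0 // -/j.
  rewrite rCl rRm catA rW_end -!catA rK.
  by rewrite rKe.
case: (eqVneq k j) => [->|Hkj].
  rewrite sig_j //; case: eps @g => g /=.
    rewrite ext3' gI1 gJ1 // -/j.
    rewrite rR3 rRm rW_front -!catA rK' rKe' //.
  by rewrite ext1 gI0.
by rewrite sig_o // ext_t gO.
Qed.

Lemma part2 (Hn : 0 < n) N : forall f : 'I_n -> word, norm f <= N -> Qf f ->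
  exists s : seq ('I_n * bool), all (fun p : 'I_n * bool => p.1.+1 < n) s /\
    forall k, sigma_prod s k = reduce (f k).
Proof.
elim: N => [|N IH] f Hnorm HQ.
  case: (boolP [forall k, reduce (f k) == tgen k]) => [/forallP H|H].
    by exists [::]; split => // k; rewrite (eqP (H k)).
  have [|i [eps [Hi Hd]]] := core Hn HQ.
    by move=> Hid; move/forallP: H; apply => k; rewrite Hid.
  by move: Hnorm; rewrite leqn0 => /eqP E; move: Hd; rewrite E addn2.
case: (boolP [forall k, reduce (f k) == tgen k]) => [/forallP H|H].
  by exists [::]; split => // k; rewrite (eqP (H k)).
have [|i [eps [Hi Hd]]] := core Hn HQ.
  by move=> Hid; move/forallP: H; apply => k; rewrite Hid.
have Hng : norm (acomp (sigma i eps) f) <= N.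
  by rewrite -ltnS; apply: leq_trans Hnorm; apply: leq_trans Hd; rewrite addn2.
have [s [Hs1 Hs2]] := IH _ Hng (Qpres eps HQ Hi).
exists ((i, ~~ eps) :: s); split; first by rewrite /= Hi.
move=> k; rewrite /= /acomp -(back f eps k Hi).
by apply: ext_congr => m; rewrite Hs2 reduceK.
Qed.

End P2.

Theorem proposition3p3 (n : nat) (hn : 1 <= n) :
  (forall f : 'I_n -> word n, inB f -> ~ is_identity f ->
     exists (i : 'I_n) (eps : bool),
       i.+1 < n /\ norm (acomp (sigma i eps) f) + 2 <= norm f) /\
  (forall f : 'I_n -> word n, inB f ->
     exists s : seq ('I_n * bool),
       all (fun p : 'I_n * bool => p.1.+1 < n) s /\
       forall k : 'I_n, sigma_prod s k = reduce (f k)).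
Proof.
split.
  by move=> f Hf Hid; apply: core hn (inB_Q Hf) Hid.
by move=> f Hf; apply: (part2 hn (leqnn _) (inB_Q Hf)).
Qed.
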